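(* Let $\mathcal{A} \in \{\text{GS}, \text{DFS}, \text{LDFS}, \text{MCS}, \text{MNS}\}$ and let $v$ be a vertex of a finite, simple, undirected, connected graph $G$ with at least two vertices. The following are equivalent: (i) $v$ is the $\mathcal{L}$-root leaf of some $\mathcal{A}$-ordering of $G$; (ii) $v$ is an $\mathcal{L}$-leaf of some $\mathcal{A}$-ordering of $G$; (iii) $v$ is not a cut vertex of $G$.
   Context: A vertex ordering of $G$ is a bijection $\sigma:\{1,\dots,n\}\to V(G)$; $u \prec_\sigma w$ means $u$ comes before $w$. Searches are defined by the following label search: initially every vertex has label $\emptyset$; for $i=1,\dots,n$, choose any unnumbered vertex $x$ such that there is no unnumbered $y$ with $\mathrm{label}(x) \prec_{\mathcal{A}} \mathrm{label}(y)$, set $\sigma(i)=x$, and add $i$ to the labels of all unnumbered neighbors of $x$. The orderings produced are the $\mathcal{A}$-orderings. The strict partial orders on finite subsets of positive integers are: GS: $A \prec B$ iff $A=\emptyset$ and $B\neq\emptyset$. DFS: $A \prec B$ iff ($A=\emptyset$, $B\neq\emptyset$) or $\max(A)<\max(B)$. LDFS: $A \prec B$ iff $A\subsetneq B$ or $\max(A\setminus B)<\max(B\setminus A)$. MCS: $A\prec B$ iff $|A|<|B|$. MNS: $A \prec B$ iff $A \subsetneq B$. For a GS ordering $\sigma$ of connected $G$, the $\mathcal{L}$-tree of $\sigma$ is the spanning tree containing, for each vertex $v\neq\sigma(1)$, the edge from $v$ to its rightmost neighbor $w$ with $w\prec_\sigma v$. A vertex is an $\mathcal{L}$-leaf of $\sigma$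 if it is a leaf of the $\mathcal{L}$-tree; it is the $\mathcal{L}$-root leaf if additionally it equals $\sigma(1)$. *)

(* Defs.v *)
From mathcomp Require Import all_boot.
Set Implicit Arguments. Unset Strict Implicit. Unset Printing Implicit Defensive.

(* A finite simple undirected graph: vertex type T : finType, adjacency
   e : rel T, symmetric and irreflexive. *)

(* Vertex orderings are represented as duplicate-free sequences s of all
   vertices: sigma(i) = nth _ s (i-1) for i = 1..n.  Labels are finite sets
   of positions, i.e. subsets of {1,..,n}, represented inside 'I_(n.+1). *)
Section LabelSearch.
Variable T : finType.
Variable e : rel T.

Definition labT := {set 'I_(#|T|.+1)}.

Inductive search := GS | DFS | LDFS | MCS | MNS.

Definition setmax (A : labT) : nat := \max_(i in A) (i : nat).

Definition search_prec (a : search) (A B : labT) : bool :=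
  match a with
  | GS => (A == set0) && (B != set0)
  | DFS => ((A == set0) && (B != set0))
           || [&& A != set0, B != set0 & setmax A < setmax B]
  | LDFS => (A \proper B)
           || [&& A :\: B != set0, B :\: A != set0 &
                  setmax (A :\: B) < setmax (B :\: A)]
  | MCS => #|A| < #|B|
  | MNS => A \proper B
  end.

(* label of vertex x just before step i+1 (0-based index i), i.e. the set of
   positions j in {1..i} such that sigma(j) is adjacent to x. *)
Definition label (s : seq T) (i : nat) (x : T) : labT :=
  [set j : 'I_(#|T|.+1) | (0 < j <= i) && e (nth x s j.-1) x].

Definition is_ordering (s : seq T) : Prop := uniq s /\ size s = #|T|.

Definition is_search_ordering (a : search) (s : seq T) : Prop :=
  is_ordering s /\
  forall (i : nat) (x0 : T), i < size s ->
    forall y : T, y \notin take i s ->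
      ~~ search_prec a (label s i (nth x0 s i)) (label s i y).

Definition ltree_edge (s : seq T) (u w : T) : bool :=
  [&& index w s < index u s, e w u &
      [forall w' : T, (index w s < index w' s < index u s) ==> ~~ e w' u]].

Definition ltree_deg (s : seq T) (v : T) : nat :=
  #|[set u | ltree_edge s u v || ltree_edge s v u]|.

Definition is_Lleaf (s : seq T) (v : T) : Prop := ltree_deg s v = 1.

Definition is_Lroot_leaf (s : seq T) (v : T) : Prop :=
  is_Lleaf s v /\ (exists x0 : T, s <> [::] /\ nth x0 s 0 = v).

Definition connected_graph : Prop := forall x y : T, connect e x y.

Definition del_vertex (v : T) : rel T := [rel a b | [&& e a b, a != v & b != v]].

(* v is a cut vertex: deleting v disconnects two vertices that were
   connected in G (i.e. increases the number of connected components). *)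
Definition cut_vertex (v : T) : Prop :=
  exists x y : T, [/\ x != v, y != v, connect e x y & ~~ connect (del_vertex v) x y].

End LabelSearch.

(* Main.v *)
Require Import Defs.
From mathcomp Require Import all_boot.
Set Implicit Arguments. Unset Strict Implicit. Unset Printing Implicit Defensive.

Section Orders.
Variable T : finType.
Local Notation N := (#|T|.+1).

Lemma setmax_ge (A : labT T) (i : 'I_N) : i \in A -> i <= setmax A.
Proof. by move=> iA; rewrite /setmax; apply: (@leq_bigmax_cond _ (mem A) (fun i : 'I_N => (i : nat))). Qed.

Lemma setmax_in (A : labT T) : A != set0 -> exists2 i : 'I_N, i \in A & setmax A = i.
Proof. by rewrite /setmax -card_gt0 => /(eq_bigmax_cond (fun i : 'I_N => (i : nat))) [i iA ->]; exists i. Qed.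

Lemma prec_irr a (A : labT T) : ~~ search_prec a A A.
Proof.
case: a => /=; rewrite ?ltnn ?properE ?setDv ?eqxx //=; try by rewrite andbN.
by rewrite !andbF orbF andbN.
Qed.

Lemma prec_empty a (B : labT T) : B != set0 -> search_prec a set0 B.
Proof.
move=> nB; case: a => /=; rewrite ?eqxx ?nB //.
- by rewrite properE sub0set subset0 nB.
- by rewrite cards0 card_gt0.
- by rewrite properE sub0set subset0 nB.
Qed.

Lemma prec_big a (A B : labT T) (j : 'I_N) : j \in A -> #|B| <= 1 ->
  (forall b : 'I_N, b \in B -> b < j) -> ~~ search_prec a A B.
Proof.
move=> jA cB hB.
have jB : j \notin B by apply/negP => /hB; rewrite ltnn.
have nA : A != set0 by apply/set0Pn; exists j.
have nprop : ~~ (A \proper B).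
  by apply/negP => /properP [/subsetP /(_ j jA)]; rewrite (negbTE jB).
case: a => /=.
- by rewrite (negbTE nA).
- rewrite (negbTE nA) /=; case: (boolP (B == set0)) => //= nB; rewrite -leqNgt.
  case: (setmax_in nB) => b bB ->; apply: leq_trans (setmax_ge jA).
  exact: ltnW (hB _ bB).
- rewrite negb_or nprop /=; apply/negP => /and3P [_ nD].
  have jD : j \in A :\: B by rewrite inE jB jA.
  case: (setmax_in nD) => b; rewrite inE => /andP [_ bB] ->.
  by rewrite ltnNge (leq_trans (ltnW (hB _ bB)) (setmax_ge jD)).
- rewrite -leqNgt; apply: leq_trans cB _; rewrite card_gt0; exact: nA.
- exact: nprop.
Qed.

Lemma sum_pow2_lt (S : labT T) m : (forall i : 'I_N, i \in S -> i < m) ->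
  \sum_(i in S) 2 ^ i < 2 ^ m.
Proof.
move=> hS.
have h1 : \sum_(i in S) 2 ^ i <= \sum_(i < N | i < m) 2 ^ i.
  rewrite [X in _ <= X]big_mkcond [X in X <= _]big_mkcond /=.
  apply: leq_sum => i _; case: ifP => // /hS ->; exact: leqnn.
have h2 : \sum_(i < N | i < m) 2 ^ i <= \sum_(i < m) 2 ^ i.
  case: (leqP N m) => hNm.
  - rewrite (big_ord_widen_cond _ (fun i => i < m) (fun i => 2 ^ i) hNm) big_mkcond [X in _ <= X]big_mkcond /=.
    by apply: leq_sum => i _; case: ifP; rewrite ?andbF.
  - rewrite [X in _ <= X](big_ord_widen_cond _ predT (fun i => 2 ^ i) (ltnW hNm)) /=.
    by apply: leq_sum.
have h3 : forall k, \sum_(i < k) 2 ^ i < 2 ^ k.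
  elim=> [|k IH]; first by rewrite big_ord0.
  by rewrite big_ord_recr /= expnS mul2n -addnn ltn_add2r.
exact: leq_ltn_trans h1 (leq_ltn_trans h2 (h3 m)).
Qed.

Definition rank (a : search) (A : labT T) : nat :=
  match a with
  | GS => A != set0
  | DFS => if A == set0 then 0 else (setmax A).+1
  | LDFS => \sum_(i in A) 2 ^ i
  | MCS => #|A|
  | MNS => #|A|
  end.

Lemma rank_prec a (A B : labT T) : search_prec a A B -> rank a A < rank a B.
Proof.
case: a => /=.
- by case/andP => /eqP -> ->; rewrite eqxx.
- case/orP => [/andP [/eqP -> /negbTE ->]|/and3P [/negbTE -> /negbTE -> h]] //.
  by rewrite eqxx.
- have split0 : forall X Y : labT T, \sum_(i in X) 2 ^ i =
      \sum_(i in X :&: Y) 2 ^ i + \sum_(i in X :\: Y) 2 ^ i.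
    by move=> X Y; rewrite (big_setID Y).
  case/orP => [hp|/and3P [nAB nBA hm]].
  + rewrite (split0 B A) (setIidPr (proper_sub hp)).
    rewrite -[X in X < _]addn0 ltn_add2l.
    move/properP: hp => [_ [x xB xA]].
    rewrite (bigD1 x) ?inE ?xB ?xA //=.
    by rewrite addn_gt0 expn_gt0.
  + rewrite (split0 A B) (split0 B A) setIC ltn_add2l.
    case: (setmax_in nBA) => m mBA hmeq.
    rewrite [X in _ < X](bigD1 m) //=.
    apply: leq_trans (leq_addr _ _).
    apply: sum_pow2_lt => i iAB; rewrite -hmeq.
    exact: leq_ltn_trans (setmax_ge iAB) hm.
- by [].
- exact: proper_card.
Qed.

End Orders.

Section Graph.
Variable T : finType.
Variable e : rel T.
Hypothesis e_sym : symmetric e.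
Local Notation N := (#|T|.+1).

Lemma crossing (r : rel T) (P : pred T) a b : connect r a b -> P a -> ~~ P b ->
  exists u w, [/\ P u, ~~ P w & r u w].
Proof.
move/connectP=> [p]; elim: p a => [|c p IH] a /=; first by move=> _ -> ->.
case/andP => rac pth lst Pa nPb.
case: (boolP (P c)) => Pc; first exact: IH pth lst Pc nPb.
by exists a, c.
Qed.

Lemma ord_in_s (s : seq T) x : is_ordering s -> x \in s.
Proof.
move=> [us ss].
have : #|[pred y | y \in s]| = #|[pred y : T | true]|.
  by rewrite (card_uniqP us) ss; apply: eq_card => y.
move/subset_cardP => /(_ (subset_predT _)) h.
by have := h x; rewrite !inE.
Qed.

Lemma label0 (s : seq T) y : label e s 0 y = set0.
Proof. by apply/setP => j; rewrite !inE lt0n leqn0 andNb. Qed.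

Lemma label_rcons p x i y : i <= size p -> label e (rcons p x) i y = label e p i y.
Proof.
move=> hi; apply/setP => j; rewrite !inE.
case: (boolP (0 < j <= i)) => //= /andP [j0 ji].
rewrite nth_rcons ifT //; case: (nat_of_ord j) j0 ji => // j' _ /= ji.
exact: leq_trans ji hi.
Qed.

Lemma parent_edge (s : seq T) x w0 : index w0 s < index x s -> e w0 x ->
  exists w, ltree_edge e s x w.
Proof.
move=> h1 h2.
case: (@arg_maxnP _ w0 (fun w => (index w s < index x s) && e w x) (fun w => index w s)).
  by rewrite h1 h2.
move=> w /andP [hw1 hw2] hmax; exists w.
rewrite /ltree_edge hw1 hw2 /=; apply/forallP => w'; apply/implyP => /andP [a1 a2].
apply/negP => ew'; have := hmax w'; rewrite a2 ew' => /(_ isT).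
by rewrite /= leqNgt a1.
Qed.

Lemma parent_uniq (s : seq T) x w1 w2 : is_ordering s ->
  ltree_edge e s x w1 -> ltree_edge e s x w2 -> w1 = w2.
Proof.
move=> os /and3P [a1 b1 /forallP c1] /and3P [a2 b2 /forallP c2].
have : index w1 s = index w2 s.
  case: (ltngtP (index w1 s) (index w2 s)) => // h.
  - by have := c1 w2; rewrite h a2 /= b2.
  - by have := c2 w1; rewrite h a1 /= b1.
move=> h; rewrite -(nth_index w1 (ord_in_s w1 os)) h.
exact: nth_index (ord_in_s w2 os).
Qed.

Lemma gs_parent a (s : seq T) x : connected_graph e -> is_search_ordering e a s ->
  0 < index x s -> exists w, ltree_edge e s x w.
Proof.
move=> hc [os hs] ix.
have xs := ord_in_s x os.
have ixs : index x s < size s by rewrite index_mem.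
set i := index x s.
have hx : nth x s i = x by exact: nth_index.
have s0 : nth x s 0 \in take i s.
  rewrite in_take ?mem_nth ?(leq_ltn_trans _ ixs) //.
  by rewrite index_uniq ?(leq_ltn_trans _ ixs) //; case: os.
have xnt : x \notin take i s by rewrite in_take // ltnn.
case: (crossing (hc (nth x s 0) x) s0 xnt) => u [w [ut wt euw]].
have us : u \in s := mem_take ut.
have iu : index u s < i by rewrite -in_take.
have hj : (index u s).+1 < N.
  by rewrite ltnS; case: os => _ <-; exact: ltn_trans iu ixs.
have lw : label e s i w != set0.
  apply/set0Pn; exists (Ordinal hj); rewrite inE /= iu /= nth_index //.
have := hs i x ixs w wt; rewrite hx.
case: (boolP (label e s i x == set0)) => [/eqP ->|].
  by rewrite prec_empty.
case/set0Pn => j; rewrite inE => /andP [/andP [j0 ji] ej] _.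
apply: (@parent_edge _ _ (nth x s j.-1)) => //.
have jl : j.-1 < size s by apply: leq_ltn_trans (leq_trans (leq_pred j) ji) ixs.
rewrite index_uniq //; last by case: os.
by rewrite -ltnS prednK.
Qed.

Lemma del_sym v : symmetric (del_vertex e v).
Proof. by move=> x y; rewrite /del_vertex /= e_sym; case: (x != v); case: (y != v); rewrite ?andbF ?andbT. Qed.

Lemma leaf_not_cut a (s : seq T) v : connected_graph e -> is_search_ordering e a s ->
  is_Lleaf e s v -> ~ cut_vertex e v.
Proof.
move=> hc hso hl.
have os := hso.1.
move: hl; rewrite /is_Lleaf /ltree_deg => /eqP /cards1P [c hS].
have inS u : (ltree_edge e s u v || ltree_edge e s v u) = (u == c).
  by have := congr1 (fun A : {set T} => u \in A) hS; rewrite !inE.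
pose r := if index v s == 0 then c else nth v s 0.
have key : forall k x, index x s < k -> x != v -> connect (del_vertex e v) x r.
  elim=> [//|k IH] x; rewrite ltnS => hk xv.
  case: (posnP (index x s)) => ix.
    have x0 : x = nth v s 0 by rewrite -ix nth_index // (ord_in_s x os).
    rewrite /r; case: eqP => iv.
      by move: xv; rewrite x0 -iv nth_index ?eqxx // (ord_in_s v os).
    by rewrite -x0 connect0.
  case: (gs_parent hc hso ix) => p hp.
  case: (eqVneq p v) => [pv|pv].
    have xc : x = c by apply/eqP; rewrite -inS -pv hp.
    rewrite /r; case: eqP => iv; first by rewrite xc connect0.
    have [q hq] : exists q, ltree_edge e s v q by apply: gs_parent hc hso _; rewrite lt0n; apply/eqP.
    have qc : q = c by apply/eqP; rewrite -inS hq orbT.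
    move: hq hp; rewrite /ltree_edge pv => /andP [h1 _] /andP [h2 _].
    by move: (ltn_trans h1 h2); rewrite qc -xc ltnn.
  apply: connect_trans (IH p _ pv).
    apply: connect1; rewrite /del_vertex /= xv pv andbT e_sym.
    by case/and3P: hp => _ ->.
  by case/and3P: hp => h _ _; exact: leq_trans h hk.
move=> [x [y [xv yv _ ncon]]].
have hx := key _ x (ltnSn _) xv.
have hy := key _ y (ltnSn _) yv.
move/negP: ncon; apply; apply: connect_trans hx _.
by rewrite (sym_connect_sym (@del_sym v)).
Qed.

End Graph.

Section Construct.
Variable T : finType.
Variable e : rel T.
Variable a : search.
Variable v : T.
Hypothesis hc : connected_graph e.
Hypothesis hG : forall x y, x != v -> y != v -> connect (del_vertex e v) x y.
Local Notation N := (#|T|.+1).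

Definition cinv (p : seq T) : Prop :=
  [/\ uniq p, nth v p 0 = v,
   (forall i x0, i < size p -> forall y, y \notin take i p ->
      ~~ search_prec a (label e p i (nth x0 p i)) (label e p i y)) &
   (forall i, 0 < i < size p -> exists2 j : 'I_N, j \in label e p i (nth v p i) &
      (i == 1) || (1 < j))].

Lemma take_rcons_le (p : seq T) x i : i <= size p -> take i (rcons p x) = take i p.
Proof. by move=> hi; rewrite -cats1 takel_cat. Qed.

Lemma extend p : 0 < size p < #|T| -> cinv p -> exists x, cinv (rcons p x).
Proof.
move=> /andP [p0 pn] [up p0v hs hg].
have [z zp] : exists z, z \notin p.
  case: (pickP [pred z | z \notin p]) => [z hz|h]; first by exists z.
  have : size (enum T) <= size p.
    apply: uniq_leq_size; first exact: enum_uniq.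
    by move=> y _; have := h y; rewrite /= => /negbFE.
  by rewrite -cardT leqNgt pn.
set k := size p.
have vp : v \in p by rewrite -p0v mem_nth.
have [u [w [uP wP euw hu]]] : exists u w, [/\ u \in p, w \notin p, e u w &
    (k == 1) || (0 < index u p)].
  case: (eqVneq k 1) => hk.
    case: (crossing (hc v z) vp zp) => u [w [h1 h2 h3]].
    by exists u, w; split; rewrite ?eqxx.
  have k2 : 1 < k by rewrite ltn_neqAle eq_sym hk p0.
  have ap : nth v p 1 \in p by rewrite mem_nth.
  have av : nth v p 1 != v.
    by rewrite -{2}p0v nth_uniq.
  have zv : z != v by apply: contraNneq zp => ->.
  case: (crossing (hG av zv) ap zp) => u [w [h1 h2 /and3P [h3 h4 _]]].
  exists u, w; split => //; apply/orP; right; rewrite lt0n.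
  apply: contraNneq h4 => iu.
  by rewrite -p0v -iu nth_index.
pose C := [pred y | (y \notin p) &&
   [exists j : 'I_N, (j \in label e p k y) && ((k == 1) || (1 < j))]].
have iuk : index u p < k by rewrite index_mem.
have hj : (index u p).+1 < N by rewrite ltnS (ltn_trans iuk pn).
have wC : C w.
  rewrite /C /= wP /=; apply/existsP; exists (Ordinal hj).
  rewrite inE /= iuk nth_index // euw /=.
  by [].
case: (@arg_maxnP _ w C (fun y => rank a (label e p k y)) wC) => x xC xmax.
exists x; move: (xC) => /andP [xp /existsP [jx /andP [jxl jxc]]].
split.
- by rewrite rcons_uniq xp up.
- by rewrite nth_rcons p0.
- move=> i x0; rewrite size_rcons ltnS leq_eqVlt => /orP [/eqP ->|hi] y.
  + rewrite take_rcons_le // take_size nth_rcons ltnn eqxx !label_rcons // => yp.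
    case: (boolP (C y)) => yC.
      apply/negP => /rank_prec h; have := xmax y yC.
      by rewrite /= leqNgt h.
    move: yC; rewrite /C /= yp /= negb_exists => /forallP hy.
    have hy' : forall b, b \in label e p k y -> ~~ ((k == 1) || (1 < b)).
      by move=> b bL; have := hy b; rewrite bL.
    have hb1 : forall b : 'I_N, b \in label e p k y -> val b = 1.
      move=> b bL; have := hy' b bL; rewrite negb_or => /andP [_ h].
      move: bL; rewrite inE => /andP [/andP [b0 _] _].
      by apply/eqP; rewrite eqn_leq b0 andbT leqNgt.
    apply: (@prec_big _ a (label e p k x) (label e p k y) jx jxl).
      apply/card_le1_eqP => b1 b2 /hb1 h1 /hb1 h2; apply: val_inj.
      by rewrite h1 h2.
    move=> b bL; case/orP: jxc => [k1|]; first by move: (hy' b bL); rewrite k1.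
    by rewrite (hb1 b bL).
  + rewrite take_rcons_le ?(ltnW hi) // nth_rcons hi !label_rcons ?(ltnW hi) //.
    exact: hs.
- move=> i; rewrite size_rcons ltnS => /andP [i0]; rewrite leq_eqVlt => /orP [/eqP ->|hi].
    by rewrite nth_rcons ltnn eqxx label_rcons //; exists jx.
  rewrite nth_rcons hi label_rcons ?(ltnW hi) //.
  by apply: hg; rewrite i0 hi.
Qed.
End Construct.

Lemma not_cut_root (a : search) (T : finType) (e : rel T)
  (hT : 2 <= #|T|) (hc : connected_graph e) (v : T) :
  ~ cut_vertex e v -> exists s, is_search_ordering e a s /\ is_Lroot_leaf e s v.
Proof.
move=> ncut.
have hG : forall x y, x != v -> y != v -> connect (del_vertex e v) x y.
  move=> x y xv yv; apply/negPn/negP => h; apply: ncut; exists x, y; split => //.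
have build : forall k, 0 < k <= #|T| -> exists p, size p = k /\ cinv e a v p.
  elim=> [//|k IH] /andP [_ hk].
  case: (posnP k) => [->|k0].
    exists [:: v]; split => //; split => //.
      move=> i x0; rewrite ltnS leqn0 => /eqP -> y _.
      by rewrite !label0 prec_irr.
    by move=> i; case: i => [|[]].
  case: (IH _) => [|p [sp ip]]; first by rewrite k0 ltnW.
  case: (extend hc hG _ ip) => [|x ix]; first by rewrite sp k0.
  by exists (rcons p x); rewrite size_rcons sp.
case: (build #|T|) => [|s [ss [us hv0 hs hg]]]; first by rewrite leqnn (leq_trans _ hT).
have os : is_ordering s by [].
have s1 : 1 < size s by rewrite ss.
have s0 : 0 < size s by rewrite ltnW.
exists s; split; first by split.
split; last by exists v; split => //; case: (s) s0.
have iv0 : index v s = 0 by rewrite -{1}hv0 index_uniq.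
apply/eqP/cards1P; exists (nth v s 1); apply/setP => u; rewrite !inE.
have -> : ltree_edge e s v u = false by rewrite /ltree_edge iv0 ltn0.
rewrite orbF; apply/idP/eqP.
  case/and3P => h1 h2 /forallP h3.
  have ui : nth v s (index u s) = u by rewrite nth_index // (ord_in_s u os).
  have ius : index u s < size s by rewrite index_mem (ord_in_s u os).
  case: (eqVneq (index u s) 1) => [i1|i1]; first by rewrite -i1 ui.
  move: h1; rewrite iv0 => h1.
  have [j jl j1] := hg _ (introT andP (conj h1 ius)).
  move: j1; rewrite (negbTE i1) /= => j1.
  move: jl; rewrite ui inE => /andP [/andP [j0 ji] ej].
  have jl : j.-1 < size s by apply: leq_ltn_trans (leq_trans (leq_pred j) ji) ius.
  have := h3 (nth u s j.-1).
  rewrite iv0 index_uniq // ej /= -ltnS prednK // ji andbT.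
  by rewrite j1.
move=> ->.
have i1 : index (nth v s 1) s = 1 by rewrite index_uniq.
rewrite /ltree_edge i1 iv0 /=.
have [j jl _] := hg 1 (introT andP (conj isT s1)).
move: jl; rewrite inE => /andP [/andP [j0 ji] ej].
have j1 : nat_of_ord j = 1 by apply/eqP; rewrite eqn_leq ji j0.
move: ej; rewrite j1 /= (set_nth_default v) // hv0 => ->.
apply/forallP => w'; apply/implyP => /andP [].
by case: (index w' s).
Qed.

Theorem theorem2 (a : search) (T : finType) (e : rel T)
  (e_sym : symmetric e) (e_irr : irreflexive e)
  (hT : 2 <= #|T|) (hconn : connected_graph e) (v : T) :
  ((exists s, is_search_ordering e a s /\ is_Lroot_leaf e s v) <->
   (exists s, is_search_ordering e a s /\ is_Lleaf e s v)) /\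
  ((exists s, is_search_ordering e a s /\ is_Lleaf e s v) <->
   ~ cut_vertex e v).
Proof.
have h23 : (exists s, is_search_ordering e a s /\ is_Lleaf e s v) -> ~ cut_vertex e v.
  by move=> [s [hs hl]]; exact: (leaf_not_cut e_sym hconn hs hl).
split; split.
- by move=> [s [hs [hl _]]]; exists s.
- by move=> h; apply: not_cut_root => //; exact: h23.
- exact: h23.
- by move=> h; case: (not_cut_root a hT hconn h) => s [hs [hl _]]; exists s.
Qed.
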